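(* Let $\ell\ge 2$, $A\ge 2$ and $H\ge \ell+1$ be integers. There exists an episodic tabular MDP with $A$ actions, horizon $H$, at most $S\le 1+A^{\ell}$ states and deterministic transitions, together with a fixed initial state $s_1$, such that every fixed batching policy (for any batching horizon $B\in\{1,\dots,\ell\}$) collects an expected cumulative reward of at most $A^{-\ell/2+1}$ from $s_1$, whereas the optimal value achievable by $\ell$-step lookahead policies from $s_1$ is larger than $1/2$.
   Context: An episodic tabular MDP has finite state space $\mathcal{S}$ ($|\mathcal{S}|=S$), finite action space $\mathcal{A}$ ($|\mathcal{A}|=A$), horizon $H$, reward distributions $\mathcal{R}_h(s,a)$ supported in $[0,1]$ and transition kernels $P_h(\cdot\mid s,a)$; rewards and transitions are independent across time steps but may be arbitrarily correlated across states and actions within a step. The value of a policy is its expected cumulative reward $\mathbb{E}[\sum_{t=1}^H R_t]$. The $\ell$-step lookahead information at step $h$ in state $s$ consists of the realized rewards and next states along all trajectories from $s$ over steps $h,\dots,h+\ell_h-1$ under every deterministic Markov policy (equivalently, the realized reward and next state of every state-action pair reachable from $s$ at each of these steps), where $\ell_h=\min\{\ell,H-h+1\}$; realizations are consistent across trajectories. An $\ell$-step lookahead policy chooses $a_h$ as a function of $s_h$ and the $\ell$-step lookahead information observed at step $h$ (and the history). A fixed batching policy with batching horizon $B\le \ell$ only observes lookahead information at the predefined steps $nB+1$ ($n=0,1,\dots$): at step $nB+1$ it observes the $B$-step lookahead information from $s_{nB+1}$, and for all steps $h\in\{nB+1,\dots,(n+1)B\}$ its action depends only on $s_h$ and this information.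 *)

(* Defs.v *)
From HB Require Import structures.
From mathcomp Require Import all_boot all_order all_algebra.
From mathcomp Require Import reals exp.
Set Implicit Arguments. Unset Strict Implicit. Unset Printing Implicit Defensive.
Import Order.TTheory GRing.Theory Num.Theory.
Local Open Scope ring_scope.

(* Steps are 0-indexed: paper step h corresponds to t = h-1, t < H.
   The randomness of step t is an outcome o : Om drawn with probability
   prob t o, independently across steps; it determines the reward and the
   next state of EVERY state-action pair at step t (arbitrary correlation
   within a step). *)
Record mdp (R : realType) (S Ac : finType) := MDP {
  Om : finType;
  om0 : Om;                                   (* dummy outcome for t >= H *)
  prob : nat -> Om -> R;
  rew : nat -> Om -> S -> Ac -> R;
  nxt : nat -> Om -> S -> Ac -> S }.
Arguments Om {R S Ac} m.
Arguments om0 {R S Ac} m.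
Arguments prob {R S Ac} m _ _.
Arguments rew {R S Ac} m _ _ _ _.
Arguments nxt {R S Ac} m _ _ _ _.

Section Defs.
Variables (R : realType) (S Ac : finType) (M : mdp R S Ac).

Definition valid_mdp (H : nat) :=
  [/\ (forall t o, 0 <= prob M t o),
      (forall t, (t < H)%N -> \sum_(o : Om M) prob M t o = 1) &
      (forall t o s a, 0 <= rew M t o s a <= 1)].

Definition deterministic := forall t o o' s a, nxt M t o s a = nxt M t o' s a.

Definition ext (H : nat) (w : {ffun 'I_H -> Om M}) : nat -> Om M :=
  fun t => if @insub nat (fun t => (t < H)%N) _ t is Some i then w i else om0 M.

(* deterministic (history/information dependent) policies: the action at
   step t is a function of the realization; information constraints are
   imposed separately *)
Definition policy := nat -> (nat -> Om M) -> Ac.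

Fixpoint state (s1 : S) (pi : policy) (w : nat -> Om M) (t : nat) : S :=
  match t with
  | 0 => s1
  | t'.+1 => nxt M t' (w t') (state s1 pi w t') (pi t' w)
  end.

Definition ret (H : nat) (s1 : S) (pi : policy) (w : nat -> Om M) : R :=
  \sum_(t < H) rew M t (w t) (state s1 pi w t) (pi t w).

Definition value (H : nat) (s1 : S) (pi : policy) : R :=
  \sum_(w : {ffun 'I_H -> Om M})
     (\prod_(i < H) prob M i (w i)) * ret H s1 pi (ext w).

Fixpoint reach (t : nat) (s : S) (w : nat -> Om M) (k : nat) : {set S} :=
  match k with
  | 0 => [set s]
  | k'.+1 => \bigcup_(x in reach t s w k') \bigcup_(a : Ac)
               [set nxt M (t + k') (w (t + k')) x a]
  end.

(* w and w' induce the same L-step lookahead information at step t from s: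
   same realized reward and next state of every pair reachable from s at
   steps t, ..., t+L-1 *)
Definition same_la (L t : nat) (s : S) (w w' : nat -> Om M) :=
  forall k, (k < L)%N -> forall x, x \in reach t s w k -> forall a,
    rew M (t + k) (w (t + k)) x a = rew M (t + k) (w' (t + k)) x a /\
    nxt M (t + k) (w (t + k)) x a = nxt M (t + k) (w' (t + k)) x a.

Definition lookahead_policy (H l : nat) (s1 : S) (pi : policy) :=
  forall t w w',
    (forall u, (u <= t)%N ->
       state s1 pi w u = state s1 pi w' u /\
       same_la (minn l (H - u)) u (state s1 pi w u) w w') ->
    pi t w = pi t w'.

Definition batching_policy (H B : nat) (s1 : S) (pi : policy) :=
  forall t w w',
    let t0 := (t %/ B * B)%N in
    state s1 pi w t = state s1 pi w' t ->
    state s1 pi w t0 = state s1 pi w' t0 ->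
    same_la (minn B (H - t0)) t0 (state s1 pi w t0) w w' ->
    pi t w = pi t w'.

End Defs.

(* Main.v *)
Require Import Defs.
From HB Require Import structures.
From mathcomp Require Import all_boot all_order all_algebra.
From mathcomp Require Import reals exp zify lra.
Import Order.TTheory GRing.Theory Num.Theory.
Local Open Scope ring_scope.
Set Implicit Arguments. Unset Strict Implicit. Unset Printing Implicit Defensive.

Lemma state_reach (R : realType) (S Ac : finType) (M : mdp R S Ac) (s1 : S) (pi : policy M) w t k :
  state s1 pi w (t + k) \in reach t (state s1 pi w t) w k.
Proof.
elim: k => [|k IH]; first by rewrite addn0 /= set11.
rewrite addnS /=; apply/bigcupP; exists (state s1 pi w (t + k)) => //.
by apply/bigcupP; exists (pi (t + k) w) => //; rewrite set11.
Qed.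

Section Constr.
Variables (R : realType) (l' A' H : nat).
Local Notation l := l'.+2.
Local Notation A := A'.+2.
Definition St := {ffun 'I_(l'.+1) -> 'I_A}.
Definition o0 : St := [ffun => ord0].
Definition upd (t : nat) (x : St) (a : 'I_A) : St :=
  [ffun j => if (val j == t.-1) then a else x j].
Definition NN : R := (#|{: St}|)%:R.
Definition theM : mdp R St 'I_A :=
  @MDP R St 'I_A St o0 (fun t o => if t == l then NN^-1 else (o == o0)%:R)
    (fun t o x a => ((t == l) && (x == o))%:R) (fun t o x a => upd t x a).

Lemma NN_gt0 : 0 < NN.
Proof. by rewrite /NN ltr0n card_ffun card_ord expn_gt0. Qed.

Lemma NN_eq : NN = (A ^ l'.+1)%:R.
Proof. by rewrite /NN card_ffun !card_ord. Qed.

Lemma ret_eq (s1 : St) (pi : policy theM) w : (l < H)%N ->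
  @ret _ _ _ theM H s1 pi w = (state s1 pi w l == w l)%:R.
Proof.
move=> lH; rewrite /ret (bigD1 (Ordinal lH)) //= eqxx /= big1 ?addr0 //.
by move=> i /eqP ne; rewrite /=; case: eqP => // e; case: ne; apply/val_inj.
Qed.


Lemma sum_prob (t : nat) : \sum_(o : St) (if t == l then NN^-1 else (o == o0)%:R) = 1 :> R.
Proof.
case: eqP => _.
  rewrite sumr_const -[X in _ *+ X]card_ord -mulr_natr.
  by rewrite card_ord /NN mulVf // gt_eqF // NN_gt0.
rewrite (bigD1 o0) //= eqxx big1 ?addr0 // => o /negbTE ->; done.
Qed.

Lemma value_one (s1 : St) (pi : policy theM) :
  (forall w, @ret _ _ _ theM H s1 pi w = 1) -> value H s1 pi = 1.
Proof.
move=> h; rewrite /value.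
under eq_bigr => w _ do rewrite h mulr1.
rewrite -(bigA_distr_bigA (fun (i : 'I_H) (o : St) => prob theM i o)) /=.
by apply: big1 => i _; apply: sum_prob.
Qed.

Definition piL : policy theM :=
  fun t w => if t is t'.+1 then (w l : St) (inord t') else ord0.

Lemma piL_state (s1 : St) w : state s1 piL w l = w l.
Proof.
have key : forall k, (k <= l'.+1)%N -> forall j : 'I_(l'.+1), (j < k)%N ->
    (state s1 piL w k.+1 : St) j = (w l : St) j.
  elim=> [//|k IH] kl j jk /=.
  rewrite /upd ffunE /=.
  case: eqP => [e|ne].
    by rewrite /piL; congr (_ _); apply/val_inj; rewrite /= inordK // e.
  have jk' : (j < k)%N by rewrite ltn_neqAle -ltnS jk andbT; apply/eqP.
  by apply: IH => //; apply: ltnW.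
by apply/ffunP => j; apply: key.
Qed.

Lemma piL_la (s1 : St) : (l < H)%N -> lookahead_policy H l s1 piL.
Proof.
move=> lH [//|t] w w' h; rewrite /piL.
have [_ sl] := h 1%N isT.
have kk : (l'.+1 < minn l (H - 1))%N.
  by rewrite leq_min leqnn /= ltn_subRL add1n.
have := sl l'.+1 kk _ (state_reach s1 piL w 1 l'.+1) ord0.
rewrite (_ : (1 + l'.+1)%N = l) // piL_state /= eqxx /= => -[hr _].
have : (w l == w' l).
  move: hr; case: (w l == w' l) => //=; rewrite -[w (1 + _)%N]/(w l) eqxx => /eqP; by rewrite oner_eq0.
by move/eqP ->.
Qed.

Lemma piL_value (s1 : St) : (l < H)%N -> value H s1 piL = 1.
Proof.
move=> lH; apply: value_one => w; rewrite ret_eq // piL_state eqxx //.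
Qed.

Section Batch.
Hypothesis lH : (l < H)%N.
Let l0 : 'I_H := Ordinal lH.
Definition wv (v : St) : {ffun 'I_H -> Om theM} := [ffun i => if val i == l then v else o0].

Lemma ext_wv v t : ext (wv v) t = if t == l then v else o0.
Proof.
rewrite /ext; case: insubP => [i it vi|].
  by rewrite ffunE vi.
move=> Ht; case: eqP => // e; move: Ht; by rewrite e lH.
Qed.

Lemma prob_eq (w : {ffun 'I_H -> Om theM}) :
  \prod_(i < H) prob theM i (w i) = if w == wv (w l0) then NN^-1 else 0.
Proof.
rewrite (bigD1 l0) //= eqxx; case: eqP => [e|ne].
  rewrite big1 ?mulr1 // => i /eqP il0.
  have il : (val i == l) = false by apply/negbTE/eqP => e'; apply: il0; apply/val_inj.
  by rewrite il e ffunE il eqxx.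
have [i hi] : exists i, w i != wv (w l0) i.
  by apply/existsP; apply: contraT; rewrite negb_exists => /forallP h; case: ne; apply/ffunP => i; apply/eqP; move: (h i); rewrite negbK.
have il : (val i == l) = false.
  by apply: contraNF hi => /eqP e; rewrite ffunE e eqxx; apply/eqP; congr (w _); apply/val_inj.
have il0 : i != l0 by apply: contraFN il => /eqP ->.
rewrite (bigD1 i) //= il.
move: hi; rewrite ffunE il => /negbTE ->; by rewrite mul0r mulr0.
Qed.

Lemma value_eq (s1 : St) (pi : policy theM) :
  value H s1 pi = NN^-1 * \sum_(v : St) @ret _ _ _ theM H s1 pi (ext (wv v)).
Proof.
rewrite /value (partition_big (fun w : {ffun 'I_H -> Om theM} => w l0) predT) //.
rewrite mulr_sumr; apply: eq_bigr => v _.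
have wvl : wv v l0 = v by rewrite ffunE /= eqxx.
rewrite (bigD1 (wv v)); last by rewrite wvl eqxx.
rewrite prob_eq wvl eqxx big1; first exact: addr0.
by move=> w /andP [/eqP e ne]; rewrite prob_eq e (negbTE ne) mul0r.
Qed.

Lemma batch_end (B t : nat) : (0 < B)%N -> (t < l %/ B * B)%N -> (t %/ B * B + B <= l)%N.
Proof.
move=> B0 tT.
have q : (t %/ B < l %/ B)%N by rewrite ltn_divLR.
apply: leq_trans (leq_trunc_div l B).
by rewrite -mulSnr leq_mul2r q orbT.
Qed.

Variables (s1 : St) (pi : policy theM) (B : nat).
Hypothesis B0 : (0 < B)%N.
Hypothesis hpi : batching_policy H B s1 pi.
Local Notation T := (l %/ B * B)%N.
Local Notation W v := (ext (wv v)).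

Lemma const_state : forall t, (t <= T)%N -> forall v,
  state s1 pi (W v) t = state s1 pi (W o0) t.
Proof.
move=> t; elim: t {-2}t (leqnn t) => [|n IH] t tn tT v.
  by rewrite leqn0 in tn; rewrite (eqP tn).
case: t tn tT => [//|t] tn tT /=.
have tn' : (t <= n)%N by [].
rewrite IH //; last exact: ltnW.
congr upd.
apply: hpi.
- by rewrite IH //; apply: ltnW.
- rewrite IH //; first exact: leq_trans (leq_trunc_div t B) tn'.
  exact: leq_trans (leq_trunc_div t B) (ltnW tT).
- move=> k kB x _ a.
  have kB' : (k < B)%N by move: kB; rewrite leq_min => /andP [].
  have hl : ((t %/ B * B + k)%N == l) = false.
    apply/negbTE; rewrite neq_ltn; apply/orP; left.
    by apply: leq_trans (batch_end B0 tT); rewrite -addnS leq_add2l.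
  by rewrite !ext_wv hl.
Qed.

Lemma image_card k :
  (#|[set state s1 pi (W v) (T + k) | v in [set: St]]| <= A ^ k)%N.
Proof.
elim: k => [|k IH].
  rewrite addn0 expn0.
  apply: leq_trans (_ : #|[set state s1 pi (W o0) T]| <= 1)%N; last by rewrite cards1.
  apply: subset_leq_card; apply/subsetP => x /imsetP [v _ ->].
  by rewrite const_state // set11.
set I := [set state s1 pi (W v) (T + k) | v in [set: St]] in IH *.
apply: leq_trans (_ : #|[set upd (T + k) p.1 p.2 | p in setX I [set: 'I_A]]| <= _)%N.
  apply: subset_leq_card; apply/subsetP => x /imsetP [v _ ->].
  rewrite addnS /=.
  apply/imsetP; exists (state s1 pi (W v) (T + k), pi (T + k) (W v)) => //.
  by rewrite in_setX in_setT andbT; apply/imsetP; exists v.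
apply: leq_trans (leq_imset_card _ _) _.
by rewrite cardsX cardsT card_ord expnSr leq_mul2r IH orbT.
Qed.

Lemma fix_card :
  (#|[set v : St | state s1 pi (W v) l == v]| <= A ^ (l - T))%N.
Proof.
have Tl : (T <= l)%N by apply: leq_trunc_div.
apply: leq_trans (image_card (l - T)).
apply: subset_leq_card; apply/subsetP => v; rewrite inE => /eqP e.
by apply/imsetP; exists v => //; rewrite subnKC.
Qed.

Lemma value_le : value H s1 pi <= NN^-1 * (A ^ (l - T))%:R.
Proof.
rewrite value_eq ler_wpM2l ?invr_ge0 ?ler0n //.
have -> : \sum_(v : St) @ret _ _ _ theM H s1 pi (W v) =
          (#|[set v : St | state s1 pi (W v) l == v]|)%:R.
  rewrite -sum1_card natr_sum [RHS]big_mkcond; apply: eq_bigr => v _.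
  by rewrite ret_eq // ext_wv eqxx inE; case: eqP.
by rewrite ler_nat fix_card.
Qed.
End Batch.
End Constr.
Local Open Scope nat_scope.

Lemma nat_facts (l B : nat) : (1 <= B <= l)%N ->
  [/\ (1 <= l %/ B * B)%N, (l %/ B * B <= l)%N & (l <= 2 * (l %/ B * B))%N].
Proof.
move=> /andP [B1 Bl].
have q1 : (0 < l %/ B)%N by rewrite divn_gt0.
have BT : (B <= l %/ B * B)%N by rewrite leq_pmull.
have := divn_eq l B; have := ltn_pmod l B1.
move: (l %/ B * B)%N (l %% B) BT => T r BT rB e.
split; [lia|lia|lia].
Qed.

Local Open Scope ring_scope.
Lemma final_ineq (R : realType) (l' A' B : nat) : (1 <= B <= l'.+2)%N ->
  (NN R l' A')^-1 * (A'.+2 ^ (l'.+2 - l'.+2 %/ B * B))%:R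
    <= powR (A'.+2%:R : R) (1 - l'.+2%:R / 2).
Proof.
move=> /nat_facts [T1 Tl lT].
move: (l'.+2 %/ B * B)%N T1 Tl lT => T T1 Tl lT.
rewrite NN_eq.
have e : ((A'.+2 ^ l'.+1)%:R : R) = (A'.+2 ^ (l'.+2 - T))%:R * (A'.+2 ^ (T - 1))%:R.
  by rewrite -natrM -expnD; congr (_ ^ _)%:R; lia.
rewrite e invfM mulrAC mulVf ?mul1r; last by rewrite pnatr_eq0 expn_eq0.
have A0 : (0 : R) <= A'.+2%:R by rewrite ler0n.
rewrite natrX -powR_mulrn // -powRN.
apply: ler_powR; first by rewrite ler1n.
rewrite natrB //.
have h : (l'.+2%:R : R) <= 2%:R * T%:R by rewrite -natrM ler_nat.
lra.
Qed.

Local Open Scope ring_scope.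
Theorem claim1 (R : realType) (l A H : nat) :
  (2 <= l)%N -> (2 <= A)%N -> (l.+1 <= H)%N ->
  exists (S Ac : finType) (M : mdp R S Ac) (s1 : S),
    [/\ #|Ac| = A /\ (#|S| <= 1 + A ^ l)%N, valid_mdp M H, deterministic M,
        (forall B, (1 <= B <= l)%N -> forall pi : policy M,
           batching_policy H B s1 pi ->
           value H s1 pi <= powR (A%:R : R) (1 - l%:R / 2)) &
        (exists pi : policy M, lookahead_policy H l s1 pi /\ 1 / 2 < value H s1 pi)].
Proof.
case: l => [|[|l']] // _; case: A => [|[|A']] // _ lH.
exists (St l' A'), 'I_A'.+2, (theM R l' A'), (o0 l' A').
split.
- split; first by rewrite card_ord.
  rewrite card_ffun !card_ord; apply: leq_trans (leq_addl _ _).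
  by rewrite leq_exp2l.
- split.
  + move=> t o /=; case: (t == l'.+2); [by rewrite invr_ge0 ler0n | by rewrite ler0n].
  + by move=> t _; apply: sum_prob.
  + by move=> t o s a /=; rewrite ler0n /=; case: (_ && _).
- by [].
- move=> B hB pi hpi.
  have B0 : (0 < B)%N by case/andP: hB.
  apply: le_trans (value_le lH B0 hpi) _.
  exact: final_ineq.
- exists (@piL R l' A'); split; first exact: piL_la.
  by rewrite piL_value // ltr_pdivrMr // mul1r ltr1n.
Qed.
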